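(* If $G$ is a graph of diameter $d$ and metric dimension $k$, then \[\frac{TC(\mathcal{H}(G))-1}{d}\leq k\leq TC(\mathcal{H}(G)).\]
   Context: A set $R$ of vertices of a graph $G$ is a resolving set if for each pair $u,v$ of distinct vertices there is $x\in R$ with $d(x,u)\neq d(x,v)$; the metric dimension is the smallest size of a resolving set. The distance hypergraph $\mathcal{H}(G)$ has vertex set $V(G)$ and, as hyperedges, all balls $B(v,r)=\{u: d(u,v)\leq r\}$ for all $v\in V(G)$ and all integers $r\geq 0$. A test cover of a hypergraph is a set of hyperedges such that every vertex lies in one of them and for every pair of distinct vertices one of them contains exactly one of the two; $TC(\cdot)$ denotes the minimum size of a test cover. *)

(* Defs.v *)
From mathcomp Require Import all_boot all_order all_algebra.
Set Implicit Arguments. Unset Strict Implicit. Unset Printing Implicit Defensive.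

Definition simple_graph (T : finType) (e : rel T) : Prop :=
  symmetric e /\ irreflexive e.

Fixpoint walkb (T : finType) (e : rel T) (n : nat) (x y : T) : bool :=
  match n with
  | 0 => x == y
  | n'.+1 => [exists z, e x z && walkb e n' z y]
  end.

Definition connected_graph (T : finType) (e : rel T) : Prop :=
  forall x y : T, exists n, walkb e n x y.

(* Graph distance: the least n such that there is a walk of length n
   from x to y.  In a connected graph this least n is < #|T|, so the
   search range iota 0 #|T| is exhaustive. *)
Definition dist (T : finType) (e : rel T) (x y : T) : nat :=
  find (fun n => walkb e n x y) (iota 0 #|T|).

Definition diameter (T : finType) (e : rel T) : nat :=
  \max_(x : T) \max_(y : T) dist e x y.

Definition resolving (T : finType) (e : rel T) (R : {set T}) : Prop :=
  forall u v : T, u != v -> exists2 x, x \in R & dist e x u != dist e x v.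

Definition is_metric_dimension (T : finType) (e : rel T) (k : nat) : Prop :=
  (exists R : {set T}, resolving e R /\ #|R| = k) /\
  (forall R : {set T}, resolving e R -> k <= #|R|).

Definition ball (T : finType) (e : rel T) (v : T) (r : nat) : {set T} :=
  [set u | dist e v u <= r].

Definition distance_hyperedge (T : finType) (e : rel T) (H : {set T}) : Prop :=
  exists v r, H = ball e v r.

Definition test_cover (T : finType) (E : {set T} -> Prop) (S : {set {set T}}) : Prop :=
  [/\ forall H, H \in S -> E H,
      forall x : T, exists2 H, H \in S & x \in H &
      forall x y : T, x != y -> exists2 H, H \in S & (x \in H) != (y \in H)].

Definition is_TC (T : finType) (E : {set T} -> Prop) (tc : nat) : Prop :=
  (exists S, test_cover E S /\ #|S| = tc) /\
  (forall S, test_cover E S -> tc <= #|S|).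

(* Main.v *)
Require Import Defs.
From mathcomp Require Import all_boot all_order all_algebra.
Import Order.TTheory GRing.Theory Num.Theory.

Lemma centers_seq (T : finType) (e : rel T) (s : seq {set T}) :
  (forall H, H \in s -> distance_hyperedge e H) ->
  exists R : {set T}, (#|R| <= size s)%N /\
    forall H, H \in s -> exists2 v, v \in R & exists r, H = ball e v r.
Proof.
elim: s => [|H s IH] hs.
  by exists set0; split => [|H]; rewrite ?cards0 ?in_nil.
have [|R [cR hR]] := IH.
  by move=> H' hH'; apply: hs; rewrite in_cons hH' orbT.
have [v [r Hv]] := hs H (mem_head _ _).
exists (v |: R); split.
  by rewrite cardsU1 /= -add1n; apply: leq_add (leq_b1 _) cR.
move=> H'; rewrite in_cons => /orP [/eqP -> | hH'].
  by exists v; [rewrite setU11 | exists r].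
have [w wR hw] := hR H' hH'; exists w => //; by rewrite setU1r.
Qed.

Lemma dist_le_diam (T : finType) (e : rel T) x y : (dist e x y <= diameter e)%N.
Proof.
rewrite /diameter; apply: leq_trans (leq_bigmax (F := fun y => dist e x y) y) _.
exact: (leq_bigmax (F := fun x => \max_y dist e x y) x).
Qed.

Local Open Scope ring_scope.

Theorem proposition3 (T : finType) (e : rel T) (k tc : nat) :
  simple_graph e -> connected_graph e ->
  is_metric_dimension e k ->
  is_TC (distance_hyperedge e) tc ->
  ((tc%:R - 1) / (diameter e)%:R <= (k%:R : rat)) /\ (k <= tc)%N.
Proof.
move=> _ _ [[R0 [resR0 cR0]] kmin] [[S [[SE Scov Ssep] cS]] tcmin].
split; last first.
  have hE : forall H, H \in enum S -> distance_hyperedge e H.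
    by move=> H; rewrite mem_enum; exact: SE.
  have [R [cR hR]] := @centers_seq _ _ _ hE.
  suff rR : resolving e R.
    by rewrite -cS; apply: leq_trans (kmin R rR) _; apply: leq_trans cR _; rewrite -cardE.
  move=> u v uv; have [H HS huv] := Ssep u v uv.
  have [w wR [r Hw]] := hR H ltac:(by rewrite mem_enum).
  exists w => //; move: huv; rewrite Hw /ball !inE.
  by apply: contra => /eqP ->.
set d := diameter e.
have Hd : (d = 0 \/ 0 < d)%N by case: (d) => [|n]; [left|right].
case: Hd => [d0 | dpos].
  by rewrite d0 invr0 mulr0 ler0n.
suff htc : (tc <= k * d + 1)%N.
  rewrite ler_pdivrMr ?ltr0n // lerBlDr -natrM natr1 ler_nat.
  by rewrite -addn1.
case: (pickP T) => [x0 _ | T0]; last first.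
  have : (tc <= #|(set0 : {set {set T}})|)%N.
    apply: tcmin; split => [H|x|x]; by [rewrite inE | have := T0 x].
  by rewrite cards0 leqn0 => /eqP ->.
pose f := fun p : T * 'I_d => ball e p.1 p.2.
pose S' := f @: setX R0 [set: 'I_d] :|: [set ball e x0 d].
apply: leq_trans (tcmin S' _) _.
  split.
  - move=> H; rewrite !inE => /orP [/imsetP [p _ ->] | /eqP ->].
      by exists p.1, p.2.
    by exists x0, d.
  - move=> x; exists (ball e x0 d); first by rewrite !inE eqxx orbT.
    by rewrite inE dist_le_diam.
  - move=> u v uv; have [x xR hx] := resR0 u v uv.
    wlog lt : u v uv hx / (dist e x u < dist e x v)%N.
      move=> W; case: (ltngtP (dist e x u) (dist e x v)) => h.
      + exact: W.
      + have [H HS hH] := W v u ltac:(by rewrite eq_sym) ltac:(by rewrite eq_sym) h.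
        by exists H => //; rewrite eq_sym.
      + by rewrite h eqxx in hx.
    have ltd : (dist e x u < d)%N by apply: (leq_trans lt); exact: dist_le_diam.
    exists (f (x, Ordinal ltd)).
      by rewrite !inE; apply/orP; left; apply: imset_f; rewrite !inE xR.
    by rewrite /f /ball /= !inE leqnn -ltnNge lt.
rewrite cardsU; apply: leq_trans (leq_subr _ _) _.
rewrite cards1 leq_add2r; apply: leq_trans (leq_imset_card _ _) _.
by rewrite cardsX cardsT card_ord cR0.
Qed.
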